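(* For every graph $G$ there exists a pot $P$ with $G\in\mathcal{O}(P)$, $\#\Sigma(P)=1$, and $\#P=T_1(G)$.
   Context: Fix a set $\Sigma$ of symbols (bond-edge types) and a disjoint copy $\hat\Sigma=\{\hat a:a\in\Sigma\}$ with $\hat{\hat a}=a$; elements of $\Sigma\cup\hat\Sigma$ are cohesive-end types. A tile is a finite multiset of cohesive-end types. A pot is a finite set $P$ of tiles such that whenever $x$ occurs in a tile of $P$, $\hat x$ occurs in some tile of $P$; $\#P$ is the number of tiles of $P$ and $\Sigma(P)$ is the set of bond-edge types $a\in\Sigma$ such that $a$ or $\hat a$ occurs in a tile of $P$. Graphs are finite, loops and multiple edges allowed. An assembly design of $G$ labels the half-edges of $G$ by cohesive-end types so that the two half-edges of each edge get complementary labels $x,\hat x$; $t_v$ is the multiset of labels at vertex $v$, $P_\lambda(G)=\{t_v:v\in V(G)\}$, and $G\in\mathcal{O}(P)$ ($P$ realizes $G$) means some assembly design $\lambda$ has $P_\lambda(G)\subseteq P$. $T_1(G)=\min\{\#P: G\in\mathcal{O}(P)\}$. *)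

(* Defs.v *)
From mathcomp Require Import all_boot.
From mathcomp.finmap Require Import finmap multiset.

Set Implicit Arguments.
Unset Strict Implicit.
Unset Printing Implicit Defensive.

Local Open Scope fset_scope.
Local Open Scope mset_scope.
Local Open Scope fset_scope.

(* (a, false) is the bond-edge type a, (a, true) is its complement \hat a. *)
Definition cend (Sigma : choiceType) := (Sigma * bool)%type.
Definition hatc (Sigma : choiceType) (x : cend Sigma) : cend Sigma := (x.1, ~~ x.2).

Definition tile (Sigma : choiceType) := {mset cend Sigma}.

Definition is_pot (Sigma : choiceType) (P : {fset tile Sigma}) : Prop :=
  forall t, t \in P -> forall x, x \in enum_mset t ->
    exists2 t', t' \in P & hatc x \in enum_mset t'.

Definition sigmaP (Sigma : choiceType) (P : {fset tile Sigma}) : {fset Sigma} :=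
  [fset x.1 | x in flatten [seq enum_mset t | t <- enum_fset P]].

(* Finite graphs with loops and multiple edges: a finite vertex type V, a  *)
(* finite edge type E, and for each edge e its two half-edges (e,false),   *)
(* (e,true) attached to the vertices ends e false, ends e true.            *)
(* (A loop is an edge with ends e false = ends e true.)                     *)

Definition assembly_design (Sigma : choiceType) (E : finType)
  (lam : E -> bool -> cend Sigma) : Prop :=
  forall e, lam e true = hatc (lam e false).

Definition tile_at (Sigma : choiceType) (V E : finType) (ends : E -> bool -> V)
  (lam : E -> bool -> cend Sigma) (v : V) : tile Sigma :=
  seq_mset [seq lam h.1 h.2 | h <- enum [pred h : E * bool | ends h.1 h.2 == v]].

Definition pot_of_design (Sigma : choiceType) (V E : finType) (ends : E -> bool -> V)
  (lam : E -> bool -> cend Sigma) : {fset tile Sigma} :=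
  [fset tile_at ends lam v | v in enum V].

Definition realizes (Sigma : choiceType) (V E : finType) (ends : E -> bool -> V)
  (P : {fset tile Sigma}) : Prop :=
  exists lam : E -> bool -> cend Sigma,
    assembly_design lam /\ pot_of_design ends lam `<=` P.

Definition is_T1 (Sigma : choiceType) (V E : finType) (ends : E -> bool -> V)
  (n : nat) : Prop :=
  (exists2 P : {fset tile Sigma}, is_pot P /\ realizes ends P & #|` P| = n) /\
  (forall P : {fset tile Sigma}, is_pot P -> realizes ends P -> n <= #|` P|).

(* Main.v *)
Require Import Defs.
From mathcomp Require Import all_boot.
From mathcomp.finmap Require Import finmap multiset.

Local Open Scope fset_scope.

Section Aux.
Variable Sigma : choiceType.
Variable a0 : Sigma.
Definition g (x : cend Sigma) : cend Sigma := (a0, x.2).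
Definition Fm (t : tile Sigma) : tile Sigma := seq_mset (map g (enum_mset t)).

Lemma mem_Fm t x : (x \in enum_mset (Fm t)) = (x \in map g (enum_mset t)).
Proof. by rewrite /Fm (perm_mem (perm_eq_seq_mset _)). Qed.

Lemma g_hat x : g (hatc x) = hatc (g x).
Proof. by []. Qed.
End Aux.
Arguments g {Sigma}.
Arguments Fm {Sigma}.
Arguments mem_Fm {Sigma}.

Theorem lemma1 (Sigma : choiceType) (V E : finType)
  (ends : E -> bool -> V) (n : nat) :
  0 < #|E| ->
  is_T1 Sigma ends n ->
  exists P : {fset tile Sigma},
    [/\ is_pot P, realizes ends P, #|` sigmaP P| = 1 & #|` P| = n].
Proof.
move=> E0 [[P [potP [lam [adl sub]]] cardP] minP].
have [e0 _] : exists e : E, true by case: (pickP (fun _ : E => true)) => [e|/eq_card0 h]; [exists e | rewrite h in E0].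
set a0 := (lam e0 false).1.
set P' := [fset Fm a0 t | t in P].
have potP' : is_pot P'.
  move=> t' /imfsetP [t tP ->] x; rewrite mem_Fm => /mapP [y yt ->].
  have [t'' t''P hy] := potP t tP y yt.
  exists (Fm a0 t''); first by apply/imfsetP; exists t''.
  by rewrite -g_hat mem_Fm; apply/mapP; exists (hatc y).
have tile_eq : forall v, tile_at ends (fun e b => g a0 (lam e b)) v = Fm a0 (tile_at ends lam v).
  move=> v; rewrite /tile_at /Fm; apply/eq_seq_msetP.
  by rewrite map_comp perm_map // perm_sym perm_eq_seq_mset.
have realP' : realizes ends P'.
  exists (fun e b => g a0 (lam e b)); split.
    by move=> e; rewrite adl.
  apply/fsubsetP => t /imfsetP [v _ ->]; rewrite tile_eq.
  apply/imfsetP; exists (tile_at ends lam v) => //=.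
  by apply: (fsubsetP sub); apply/imfsetP; exists v; rewrite ?mem_enum.
exists P'; split => //.
  apply/eqP/cardfs1P; exists a0; apply/fsetP => b; rewrite in_fset1.
  apply/idP/idP.
    move=> /imfsetP [x /flattenP [s /mapP [t tP ->]] xt ->] /=.
    case/imfsetP: tP xt => t0 _ -> xt; have : x \in enum_mset (Fm a0 t0) by [].
    by rewrite mem_Fm => /mapP [y _ ->].
  move=> /eqP ->.
  set v := ends e0 false.
  have tv : tile_at ends lam v \in P.
    by apply: (fsubsetP sub); apply/imfsetP; exists v; rewrite ?mem_enum.
  apply/imfsetP; exists (g a0 (lam e0 false)) => //.
  apply/flattenP; exists (enum_mset (Fm a0 (tile_at ends lam v))).
    apply/mapP; exists (Fm a0 (tile_at ends lam v)) => //.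
    suff : Fm a0 (tile_at ends lam v) \in P' by []. by apply/imfsetP; exists (tile_at ends lam v).
  rewrite mem_Fm; apply: map_f.
  rewrite /tile_at (perm_mem (perm_eq_seq_mset _)).
  apply/mapP; exists (e0, false) => //. by rewrite mem_enum inE.
apply/eqP; rewrite eqn_leq; apply/andP; split.
  by rewrite -cardP (leq_trans (leq_imfset_card _ _ _)).
exact: minP.
Qed.
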